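(* Let $S$ be a unilateral shift operator of any (nonzero) multiplicity acting on an infinite-dimensional Hilbert space. Then $\Lambda_k(S)=\mathbb{D}$ for all $k\in\mathbb{N}$.
   Context: $\mathbb{D}=\{z\in\mathbb{C}:|z|<1\}$. A shift of multiplicity $\dim\mathcal{K}$ is an operator unitarily equivalent to $S:\ell^2(\mathcal{K})\to\ell^2(\mathcal{K})$, $S(x_0,x_1,\dots)=(0,x_0,x_1,\dots)$, for a nonzero Hilbert space $\mathcal{K}$. For $T\in\mathcal{B}(\mathcal{L})$ and $k\in\mathbb{N}$, $\Lambda_k(T)=\{\lambda\in\mathbb{C}: PTP=\lambda P\text{ for some orthogonal projection } P \text{ of rank } k\}$. *)

(* Defs.v *)
From HB Require Import structures.
From mathcomp Require Import all_boot all_order all_algebra.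
From mathcomp Require Import complex.
From mathcomp Require Import classical_sets reals topology normedtype sequences.

Set Implicit Arguments.
Unset Strict Implicit.
Unset Printing Implicit Defensive.

Import Order.TTheory GRing.Theory Num.Theory numFieldNormedType.Exports.
Local Open Scope ring_scope.
Local Open Scope complex_scope.
Local Open Scope classical_set_scope.

Section Defs.
Variable R : realType.
Local Notation C := R[i].

Definition is_hilbert (V : lmodType C) (ip : V -> V -> C) : Prop :=
  [/\ (forall (a : C) (x y z : V), ip (a *: x + y) z = a * ip x z + ip y z),
      (forall x y : V, ip y x = (ip x y)^*),
      (forall x : V, 0 <= ip x x),
      (forall x : V, ip x x = 0 -> x = 0) &
      (forall u : nat -> V,
         (forall e : R, 0 < e -> exists N, forall m n, (N <= m)%N -> (N <= n)%N ->
            ip (u m - u n) (u m - u n) < e%:C) ->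
         exists l : V, forall e : R, 0 < e -> exists N, forall n, (N <= n)%N ->
            ip (u n - l) (u n - l) < e%:C)].

Definition normsq (V : lmodType C) (ip : V -> V -> C) (x : V) : R := complex.Re (ip x x).

Definition in_l2 (K : lmodType C) (ipK : K -> K -> C) (x : nat -> K) : Prop :=
  cvgn (series (fun n => normsq ipK (x n))).

Definition unitary_onto_l2 (L K : lmodType C) (ipL : L -> L -> C) (ipK : K -> K -> C)
    (U : L -> nat -> K) : Prop :=
  [/\ (forall (a : C) (x y : L) n, U (a *: x + y) n = a *: U x n + U y n),
      (forall x : L, series (fun n => normsq ipK (U x n)) @ \oo --> normsq ipL x) &
      (forall y : nat -> K, in_l2 ipK y -> exists x : L, U x = y)].

Definition shiftseq (K : lmodType C) (x : nat -> K) : nat -> K :=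
  fun n => if n is n'.+1 then x n' else 0.

Definition orth_proj (L : lmodType C) (ip : L -> L -> C) (P : L -> L) : Prop :=
  [/\ (forall (a : C) (x y : L), P (a *: x + y) = a *: P x + P y),
      (forall x, P (P x) = P x) &
      (forall x y, ip (P x) y = ip x (P y))].

Definition has_rank (L : lmodType C) (P : L -> L) (k : nat) : Prop :=
  exists e : 'I_k -> L,
    (forall c : 'I_k -> C, \sum_(i < k) c i *: e i = 0 -> forall i, c i = 0) /\
    (forall y : L, (exists x, P x = y) <-> exists c : 'I_k -> C, y = \sum_(i < k) c i *: e i).

Definition higher_rank_numrange (L : lmodType C) (ip : L -> L -> C) (k : nat) (T : L -> L)
  : set C :=
  [set lam | exists P : L -> L,
     [/\ orth_proj ip P, has_rank P k & forall x, P (T (P x)) = lam *: P x]].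

Definition unit_disk : set C := [set z | `|z| < 1].

End Defs.

(* Main.v *)
Require Import Defs.
From HB Require Import structures.
From mathcomp Require Import all_boot all_order all_algebra.
From mathcomp Require Import complex.
From mathcomp Require Import boolp classical_sets reals topology normedtype sequences.
From mathcomp Require Import ring lra zify.
Set Implicit Arguments.
Unset Strict Implicit.
Unset Printing Implicit Defensive.
Import Order.TTheory GRing.Theory Num.Theory numFieldNormedType.Exports.
Local Open Scope ring_scope.
Local Open Scope complex_scope.
Local Open Scope classical_set_scope.
Section IP.
Variable R : realType.
Variable V : lmodType R[i].
Variable ip : V -> V -> R[i].
Hypothesis H : is_hilbert ip.

Lemma ipLin a x y z : ip (a *: x + y) z = a * ip x z + ip y z.
Proof. by case: H. Qed.
Lemma ipC x y : ip y x = conjc (ip x y).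
Proof. by case: H. Qed.
Lemma ip_ge0 x : 0 <= ip x x.
Proof. by case: H. Qed.
Lemma ip_eq0 x : ip x x = 0 -> x = 0.
Proof. by case: H => _ _ _ /(_ x). Qed.

Lemma conjD (a b : R[i]) : conjc (a + b) = conjc a + conjc b.
Proof. exact: rmorphD. Qed.
Lemma conjM (a b : R[i]) : conjc (a * b) = conjc a * conjc b.
Proof. exact: rmorphM. Qed.
Lemma conjN (a : R[i]) : conjc (- a) = - conjc a.
Proof. exact: rmorphN. Qed.
Lemma conjB (a b : R[i]) : conjc (a - b) = conjc a - conjc b.
Proof. exact: rmorphB. Qed.

Lemma ip0l z : ip 0 z = 0.
Proof.
have := ipLin 1 0 0 z; rewrite scaler0 addr0 mul1r -{1}[ip 0 z]addr0.
by move=> /addrI <-.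
Qed.
Lemma ipDl x y z : ip (x + y) z = ip x z + ip y z.
Proof. by rewrite -[x in LHS]scale1r ipLin mul1r. Qed.
Lemma ipZl a x z : ip (a *: x) z = a * ip x z.
Proof. by rewrite -[_ *: _]addr0 ipLin ip0l addr0. Qed.
Lemma ipNl x z : ip (- x) z = - ip x z.
Proof. by rewrite -scaleN1r ipZl mulN1r. Qed.
Lemma ipBl x y z : ip (x - y) z = ip x z - ip y z.
Proof. by rewrite ipDl ipNl. Qed.
Lemma ip0r z : ip z 0 = 0.
Proof. by rewrite ipC ip0l conjc0. Qed.
Lemma ipDr x y z : ip z (x + y) = ip z x + ip z y.
Proof. by rewrite ipC ipDl conjD -!ipC. Qed.
Lemma ipZr a x z : ip z (a *: x) = conjc a * ip z x.
Proof. by rewrite ipC ipZl conjM -ipC. Qed.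
Lemma ipNr x z : ip z (- x) = - ip z x.
Proof. by rewrite ipC ipNl conjN -ipC. Qed.
Lemma ipBr x y z : ip z (x - y) = ip z x - ip z y.
Proof. by rewrite ipDr ipNr. Qed.
Lemma ip_suml (I : Type) (r : seq I) (P : pred I) (F : I -> V) z :
  ip (\sum_(i <- r | P i) F i) z = \sum_(i <- r | P i) ip (F i) z.
Proof.
elim/big_rec2: _ => [|i y1 y2 _ <-]; first by rewrite ip0l.
by rewrite ipDl.
Qed.
Lemma ip_sumr (I : Type) (r : seq I) (P : pred I) (F : I -> V) z :
  ip z (\sum_(i <- r | P i) F i) = \sum_(i <- r | P i) ip z (F i).
Proof.
elim/big_rec2: _ => [|i y1 y2 _ <-]; first by rewrite ip0r.
by rewrite ipDr.
Qed.
Lemma ip_real x : ip x x = (normsq ip x)%:C.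
Proof.
have := ip_ge0 x; rewrite /normsq; case: (ip x x) => a b.
by rewrite lecE /= => /andP[/eqP -> _].
Qed.

Lemma conj_i : conjc ('i : R[i]) = - 'i.
Proof. by rewrite /conjc /=; have -> : - ('i : R[i]) = (-0) +i* (-1) by []; rewrite oppr0. Qed.

Lemma polar x y : ip x y =
  (ip (x + y) (x + y) - ip (x - y) (x - y)
   + 'i * (ip (x + 'i *: y) (x + 'i *: y) - ip (x - 'i *: y) (x - 'i *: y))) / 4%:R.
Proof.
rewrite !(ipDl, ipBl, ipDr, ipBr, ipNl, ipNr, ipZl, ipZr) conj_i.
have i2 : ('i : R[i]) * 'i = -1 by rewrite -expr2 sqr_i.
apply: (@mulIf _ 4%:R); first by rewrite pnatr_eq0.
rewrite mulfVK; last by rewrite pnatr_eq0.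
set a := ip x y; set b := ip y x; set X := ip x x; set Y := ip y y.
rewrite !(mulrDr, mulrBr, mulrN, mulNr, mulrA, opprK) !i2.
ring.
Qed.
End IP.
Section Op.
Variable R : realType.
Variables (K : lmodType R[i]) (ipK : K -> K -> R[i]) (HK : is_hilbert ipK).
Variables (L : lmodType R[i]) (ipL : L -> L -> R[i]) (HL : is_hilbert ipL).
Variable U : L -> nat -> K.
Hypothesis HU : unitary_onto_l2 ipL ipK U.

Lemma U_lin a x y n : U (a *: x + y) n = a *: U x n + U y n.
Proof. by case: HU. Qed.
Lemma U_iso x : series (fun n => normsq ipK (U x n)) @ \oo --> normsq ipL x.
Proof. by case: HU. Qed.
Lemma U_onto y : in_l2 ipK y -> exists x, U x = y.
Proof. by case: HU => _ _ /(_ y). Qed.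

Lemma U0 n : U 0 n = 0.
Proof.
have := U_lin 1 0 0 n; rewrite scaler0 addr0 scale1r -{1}[U 0 n]addr0.
by move=> /addrI <-.
Qed.
Lemma UD x y n : U (x + y) n = U x n + U y n.
Proof. by rewrite -[x in LHS]scale1r U_lin scale1r. Qed.
Lemma UZ a x n : U (a *: x) n = a *: U x n.
Proof. by rewrite -[_ *: _]addr0 U_lin U0 addr0. Qed.
Lemma UN x n : U (- x) n = - U x n.
Proof. by rewrite -scaleN1r UZ scaleN1r. Qed.
Lemma UB x y n : U (x - y) n = U x n - U y n.
Proof. by rewrite UD UN. Qed.

Lemma normsq0 (V : lmodType R[i]) (ip : V -> V -> R[i]) :
  is_hilbert ip -> normsq ip 0 = 0.
Proof. by move=> h; rewrite /normsq (ip0l h). Qed.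

Lemma fin_norm x M : (forall n, (M <= n)%N -> U x n = 0) ->
  ipL x x = \sum_(n < M) ipK (U x n) (U x n).
Proof.
move=> hM.
have cv : series (fun n => normsq ipK (U x n)) @ \oo -->
          \sum_(n < M) normsq ipK (U x n).
  apply: cvg_near_cst; near=> N.
  have MN : (M <= N)%N by near: N; exists M.
  rewrite /series /= (@big_cat_nat _ _ _ M 0 N _ _ (leq0n M) MN) /= big_mkord.
  rewrite [X in _ + X]big1_seq ?addr0 // => n /andP[_].
  by rewrite mem_index_iota => /andP[/hM -> _]; rewrite normsq0.
have e := cvg_lim (@Rhausdorff R) cv.
rewrite (cvg_lim (@Rhausdorff R) (U_iso (x:=x))) in e.
rewrite (ip_real HL) e rmorph_sum /=.
by apply: eq_bigr => i _; rewrite -(ip_real HK).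
Unshelve. all: by end_near.
Qed.

Lemma fin_ip x y M : (forall n, (M <= n)%N -> U x n = 0) ->
  (forall n, (M <= n)%N -> U y n = 0) ->
  ipL x y = \sum_(n < M) ipK (U x n) (U y n).
Proof.
move=> hx hy.
rewrite (polar HL) !(fin_norm (M:=M)); try by move=> n hn;
  rewrite ?UB ?UD ?UZ hx // hy // ?scaler0 ?addr0 ?subr0.
symmetry; under eq_bigr => n _ do rewrite (polar HK (U x n) (U y n)).
rewrite -mulr_suml big_split sumrB /= -mulr_sumr sumrB.
congr (_ / _); congr (_ - _ + _ * (_ - _)); apply: eq_bigr => n _;
  by rewrite ?UB ?UD ?UZ.
Qed.
End Op.
Section Shift.
Variable R : realType.
Variables (K : lmodType R[i]) (ipK : K -> K -> R[i]) (HK : is_hilbert ipK).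
Variables (L : lmodType R[i]) (ipL : L -> L -> R[i]) (HL : is_hilbert ipL).
Variable U : L -> nat -> K.
Hypothesis HU : unitary_onto_l2 ipL ipK U.
Variable S : L -> L.
Hypothesis HS : forall x : L, U (S x) = shiftseq (U x).

Lemma Uinj x y : U x = U y -> x = y.
Proof.
move=> e; apply/eqP; rewrite -subr_eq0; apply/eqP; apply: (ip_eq0 HL).
rewrite (fin_norm HK HL HU (M:=0)) ?big_ord0 // => n _.
by rewrite (UB HU) e subrr.
Qed.

Lemma S_lin a x y : S (a *: x + y) = a *: S x + S y.
Proof.
apply: Uinj; apply: funext => n.
rewrite (U_lin HU) !HS /shiftseq; case: n => [|n].
  by rewrite scaler0 addr0.
by rewrite (U_lin HU).
Qed.
Lemma S0 : S 0 = 0.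
Proof.
have := S_lin 1 0 0; rewrite scaler0 addr0 scale1r -{1}[S 0]addr0.
by move=> /addrI <-.
Qed.
Lemma SD x y : S (x + y) = S x + S y.
Proof. by rewrite -[x in LHS]scale1r S_lin scale1r. Qed.
Lemma SZ a x : S (a *: x) = a *: S x.
Proof. by rewrite -[_ *: _]addr0 S_lin S0 addr0. Qed.
Lemma S_sum (I : Type) (r : seq I) (P : pred I) (F : I -> L) :
  S (\sum_(i <- r | P i) F i) = \sum_(i <- r | P i) S (F i).
Proof.
elim/big_rec2: _ => [|i y1 y2 _ <-]; first by rewrite S0.
by rewrite SD.
Qed.

Lemma S_iso x : ipL (S x) (S x) = ipL x x.
Proof.
rewrite !(ip_real HL); congr (_%:C).
have h1 := U_iso HU (x:=S x).
have h2 := U_iso HU (x:=x).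
rewrite HS -cvg_shiftS in h1.
have e : forall n, series (fun n => normsq ipK (shiftseq (U x) n)) n.+1 =
                  series (fun n => normsq ipK (U x n)) n.
  move=> n; rewrite /series /= big_nat_recl // /= (normsq0 HK) add0r.
  by apply: eq_bigr.
have ef : (fun n => series (fun n => normsq ipK (shiftseq (U x) n)) n.+1) =
   series (fun n => normsq ipK (U x n)) by apply: funext => n; apply: e.
rewrite /= ef in h1.
rewrite -(cvg_lim (@Rhausdorff R) h1).
by rewrite (cvg_lim (@Rhausdorff R) h2).
Qed.
End Shift.
Section Sub.
Variable R : realType.
Variables (K : lmodType R[i]) (ipK : K -> K -> R[i]) (HK : is_hilbert ipK).
Variables (L : lmodType R[i]) (ipL : L -> L -> R[i]) (HL : is_hilbert ipL).
Variable U : L -> nat -> K.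
Hypothesis HU : unitary_onto_l2 ipL ipK U.
Variable S : L -> L.
Hypothesis HS : forall x : L, U (S x) = shiftseq (U x).

Lemma no_eigen x (lam : R[i]) : lam != 0 -> S x = lam *: x -> x = 0.
Proof.
move=> l0 e.
have h n : shiftseq (U x) n = lam *: U x n by rewrite -HS e (UZ HU).
have z : forall n, U x n = 0.
  elim=> [|n IH].
    by move: (h 0%N) => /= /esym /eqP; rewrite scaler_eq0 (negPf l0) => /eqP.
  by move: (h n.+1) => /=; rewrite IH => /esym /eqP; rewrite scaler_eq0 (negPf l0) => /eqP.
apply: (Uinj HK HL HU); apply: funext => n; by rewrite z (U0 HU).
Qed.

Lemma sum_delta k (e : 'I_k -> L) (i0 : 'I_k) :
  \sum_(i < k) ((i == i0)%:R : R[i]) *: e i = e i0.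
Proof.
rewrite (bigD1 i0) //= eqxx scale1r big1 ?addr0 // => i /negPf ->.
by rewrite scale0r.
Qed.

Lemma sub_disk (lam : R[i]) P k : (0 < k)%N -> orth_proj ipL P -> has_rank P k ->
  (forall x, P (S (P x)) = lam *: P x) -> `|lam| < 1.
Proof.
move=> hk [Plin Pid Psa] [e [ind rng]] hP.
set i0 := Ordinal hk.
set x := e i0.
have x0 : x != 0.
  apply/eqP => ex.
  have := ind (fun i => (i == i0)%:R); rewrite sum_delta => /(_ ex i0).
  by rewrite eqxx => /eqP; rewrite oner_eq0.
have Px : P x = x.
  have [x1 <-] : exists x1, P x1 = x.
    by apply/rng; exists (fun i => (i == i0)%:R); rewrite sum_delta.
  by rewrite Pid.
set n := ipL x x.
have n0 : 0 < n.
  rewrite lt_def (ip_ge0 HL) andbT; apply/eqP => /(ip_eq0 HL) ex.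
  by rewrite ex eqxx in x0.
have e1 : ipL (S x) x = lam * n.
  by rewrite -{1}Px -{2}Px -Psa hP Px (ipZl HL).
have nr : conjc n = n by rewrite /n (ip_real HL) conjc_real.
have e2 : ipL x (S x) = conjc lam * n.
  by rewrite (ipC HL) e1 conjM nr.
have e3 : ipL (S x - lam *: x) (S x - lam *: x) = n * (1 - `|lam| ^+ 2).
  rewrite (ipBl HL) !(ipBr HL) !(ipZl HL) !(ipZr HL) e1 e2 (S_iso HK HL HU HS).
  rewrite sqr_normc; rewrite -/n; ring.
have hge := ip_ge0 HL (S x - lam *: x).
rewrite e3 pmulr_rge0 // subr_ge0 expr_le1 // in hge.
rewrite lt_neqAle hge andbT; apply/eqP => l1.
move: e3; rewrite l1 expr1n subrr mulr0 => /(ip_eq0 HL) /eqP.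
rewrite subr_eq0 => /eqP /(no_eigen) => h.
have : x = 0.
  apply: h; apply/eqP => l0; move: l1; rewrite l0 normr0 => /eqP.
  by rewrite eq_sym oner_eq0.
by move/eqP; rewrite (negPf x0).
Qed.
End Sub.
Section Constr.
Variable R : realType.
Variables (L : lmodType R[i]) (ipL : L -> L -> R[i]) (HL : is_hilbert ipL).
Variable S : L -> L.
Hypothesis S_sumH : forall (I : Type) (r : seq I) (P : pred I) (F : I -> L),
  S (\sum_(i <- r | P i) F i) = \sum_(i <- r | P i) S (F i).
Hypothesis SZH : forall a x, S (a *: x) = a *: S x.

Lemma numrange_of_onb (lam : R[i]) k (x : 'I_k -> L) :
  (forall i j, ipL (x i) (x j) = (i == j)%:R) ->
  (forall i j, ipL (S (x i)) (x j) = lam * (i == j)%:R) ->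
  higher_rank_numrange ipL k S lam.
Proof.
move=> on hS.
have coef : forall (a : 'I_k -> R[i]) i, ipL (\sum_(j < k) a j *: x j) (x i) = a i.
  move=> a i; rewrite (ip_suml HL).
  rewrite (bigD1 i) //= (ipZl HL) on eqxx mulr1 big1 ?addr0 // => j /negPf nji.
  by rewrite (ipZl HL) on nji mulr0.
pose P y := \sum_(j < k) ipL y (x j) *: x j.
exists P; split.
- split.
  + move=> a y z; rewrite /P scaler_sumr -big_split; apply: eq_bigr => j _.
    by rewrite (ipLin HL) scalerDl scalerA.
  + by move=> y; rewrite /P; apply: eq_bigr => j _; rewrite coef.
  + move=> y z; rewrite /P (ip_suml HL) (ip_sumr HL); apply: eq_bigr => j _.
    by rewrite (ipZl HL) (ipZr HL) -(ipC HL) mulrC.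
- exists x; split.
  + move=> c hc i; by rewrite -(coef c i) hc (ip0l HL).
  + move=> y; split.
    * by move=> [y0 <-]; exists (fun j => ipL y0 (x j)).
    * move=> [c ->]; exists (\sum_(j < k) c j *: x j); rewrite /P.
      by apply: eq_bigr => j _; rewrite coef.
- move=> y; rewrite /P S_sumH scaler_sumr; apply: eq_bigr => j _.
  rewrite scalerA; congr (_ *: _).
  rewrite (ip_suml HL) (bigD1 j) //= SZH (ipZl HL) hS eqxx mulr1 big1 ?addr0.
    by rewrite mulrC.
  by move=> i /negPf nij; rewrite SZH (ipZl HL) hS nij !mulr0.
Qed.
End Constr.
Section Seq.
Variable R : realType.

Lemma ge0_realC (z : R[i]) : 0 <= z -> z = (complex.Re z)%:C.
Proof. by case: z => a b; rewrite lecE /= => /andP[/eqP -> _]. Qed.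

Lemma exists_c (lam : R[i]) : `|lam| < 1 -> exists d (c : nat -> R[i]),
  [/\ forall n, (d <= n)%N -> c n = 0,
      \sum_(n < d) c n * conjc (c n) = 1 &
      \sum_(n < d) c n * conjc (c n.+1) = lam].
Proof.
move=> hl.
set r := complex.Re `|lam|.
have hr : `|lam| = r%:C by apply: ge0_realC.
have r0 : 0 <= r by rewrite -ler0c -hr normr_ge0.
have r1 : r < 1 by move: hl; rewrite hr -[X in _ < X]/(1%:C) ltcR.
pose u : R[i] := if lam == 0 then 1 else lam / `|lam|.
have hu : conjc u * u = 1.
  rewrite /u; case: eqP => [_|/eqP l0]; first by rewrite conjc1 mulr1.
  rewrite conjM conjc_inv hr conjc_real -hr.
  have n0 : `|lam| != 0 by rewrite normr_eq0.
  rewrite mulrACA [conjc lam * _]mulrC -sqr_normc.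
  by rewrite -invfM -expr2 divff // expf_neq0.
have hlam : lam = r%:C * u.
  rewrite -hr /u; case: eqP => [->|/eqP l0]; first by rewrite normr0 mul0r.
  by rewrite mulrC divfK // normr_eq0.
have [m0 hm0] : exists m0 : nat, (1 - r)^-1 < m0%:R.
  exists (Num.Def.archi_bound ((1 - r)^-1)); apply: archi_boundP.
  by rewrite invr_ge0 subr_ge0 ltW.
set m' := m0.+1.
have r1' : 0 < 1 - r by rewrite subr_gt0.
have h1 : 1 < m0%:R * (1 - r).
  by rewrite -ltr_pdivrMr // div1r.
have m'0 : 0 < m'%:R :> R by rewrite ltr0n.
have hm : r * m'.+1%:R <= m'%:R.
  rewrite /m' !mulrS !mulrDr mulr1 [r * _]mulrC.
  move: h1; rewrite mulrBr mulr1 => h1; lra.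
pose p := Num.sqrt (r / m'%:R).
pose q := Num.sqrt (1 - r * m'.+1%:R / m'%:R).
have hp : p * p = r / m'%:R by rewrite -expr2 sqr_sqrtr // divr_ge0 // ltW.
have hq : q * q = 1 - r * m'.+1%:R / m'%:R.
  rewrite -expr2 sqr_sqrtr // subr_ge0 ler_pdivrMr // mul1r //.
pose c n : R[i] := if (n < m'.+1)%N then p%:C * (conjc u) ^+ n
                   else if n == m'.+2 then q%:C else 0.
have clt : forall n, (n < m'.+1)%N -> c n = p%:C * (conjc u) ^+ n.
  by move=> n hn; rewrite /c hn.
have cm : c m'.+1 = 0 by rewrite /c eqn_leq !ltnn andbF.
have cq : c m'.+2 = q%:C by rewrite /c eqxx ltnNge leqW.
have cbig : forall n, (m'.+3 <= n)%N -> c n = 0.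
  move=> n hn; rewrite /c ifF; last by lia.
  by rewrite ifF //; lia.
have conjX : forall (z : R[i]) n, conjc (z ^+ n) = (conjc z) ^+ n.
  by move=> z n; apply: rmorphXn.
have realM : forall a b : R, (a * b)%:C = a%:C * b%:C.
  by move=> a b; apply: rmorphM.
have pw1 : forall n, (p%:C * (conjc u) ^+ n) * conjc (p%:C * (conjc u) ^+ n) = (p * p)%:C.
  move=> n; rewrite conjM conjc_real conjX conjcK mulrACA -exprMn hu expr1n.
  by rewrite mulr1 realM.
have pw2 : forall n, (p%:C * (conjc u) ^+ n) * conjc (p%:C * (conjc u) ^+ n.+1) = (p * p)%:C * u.
  move=> n; rewrite conjM conjc_real conjX conjcK exprS realM.
  transitivity (p%:C * p%:C * u * ((conjc u) ^+ n * u ^+ n)); first by ring.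
  by rewrite -exprMn hu expr1n mulr1.
have realMn : forall (a : R) n, (a *+ n)%:C = a%:C *+ n by move=> a n; apply: rmorphMn.
have realD : forall (a b : R), (a + b)%:C = a%:C + b%:C by move=> a b; apply: rmorphD.
exists m'.+3, c; split.
- exact: cbig.
- rewrite big_ord_recr big_ord_recr /= cm cq conjc0 mulr0 addr0.
  rewrite (eq_bigr (fun _ => (p * p)%:C)); last by move=> i _; rewrite clt ?ltn_ord // pw1.
  rewrite sumr_const card_ord conjc_real -realM -realMn -realD -[RHS]/((1:R)%:C).
  congr (_%:C); rewrite hp hq -mulr_natr; field.
  by rewrite lt0r_neq0.
- rewrite big_ord_recr big_ord_recr big_ord_recr /= (cbig _ (leqnn _)) cm.
  rewrite !conjc0 !mulr0 !mul0r !addr0.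
  rewrite (eq_bigr (fun _ => (p * p)%:C * u)); last first.
    move=> i _; have hi := ltn_ord i.
    rewrite (clt i) ?(clt i.+1) ?pw2 //; lia.
  rewrite sumr_const card_ord hlam -mulrnAl -realMn hp.
  congr (_%:C * _); by rewrite -(mulr_natr (r / m'%:R)) divfK // lt0r_neq0.
Qed.
End Seq.
Section Window.
Variable R : realType.

Lemma window (F : nat -> R[i]) a D M : (a + D <= M)%N ->
  (forall n, (n < a)%N -> F n = 0) -> (forall n, (a + D <= n)%N -> F n = 0) ->
  \sum_(n < M) F n = \sum_(n < D) F (a + n)%N.
Proof.
move=> hM h1 h2.
have haM : (a <= M)%N by lia.
rewrite -(big_mkord xpredT) (big_cat_nat (leq0n a) haM) /=.
rewrite big1_seq ?add0r; last first.
  by move=> n /andP[_]; rewrite mem_index_iota => /andP[_ /h1].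
rewrite (@big_cat_nat _ _ _ (a + D) _ _ _ _ (leq_addr D a) hM) /=.
rewrite [X in _ + X]big1_seq ?addr0; last first.
  by move=> n /andP[_]; rewrite mem_index_iota => /andP[/h2].
rewrite -{1}[a]add0n big_addn addKn big_mkord.
by apply: eq_bigr => i _; rewrite addnC.
Qed.

Lemma series_fin (F : nat -> R) M : (forall n, (M <= n)%N -> F n = 0) ->
  series F @ \oo --> \sum_(n < M) F n.
Proof.
move=> hM; apply: cvg_near_cst; near=> N.
have MN : (M <= N)%N by near: N; exists M.
rewrite /series /= (@big_cat_nat _ _ _ M 0 N _ _ (leq0n M) MN) /= big_mkord.
rewrite [X in _ + X]big1_seq ?addr0 // => n /andP[_].
by rewrite mem_index_iota => /andP[/hM -> _].
Unshelve. all: by end_near.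
Qed.
End Window.
Lemma div_window (j n D : nat) : (0 < D)%N -> (j * D <= n)%N -> (n < j * D + D)%N ->
  (n %/ D)%N = j.
Proof.
move=> D0 h1 h2.
rewrite -(subnKC h1) divnMDl // divn_small ?addn0 //; lia.
Qed.

Lemma realCM (R : realType) (a b : R) : (a * b)%:C = a%:C * b%:C.
Proof. exact: rmorphM. Qed.

Section Final.
Variable R : realType.
Variables (K : lmodType R[i]) (ipK : K -> K -> R[i]) (HK : is_hilbert ipK).
Hypothesis HKnz : exists v : K, v != 0.
Variables (L : lmodType R[i]) (ipL : L -> L -> R[i]) (HL : is_hilbert ipL).
Variable U : L -> nat -> K.
Hypothesis HU : unitary_onto_l2 ipL ipK U.
Variable S : L -> L.
Hypothesis HS : forall x : L, U (S x) = shiftseq (U x).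

Lemma unit_vec : exists w : K, ipK w w = 1.
Proof.
case: HKnz => v v0.
set t := normsq ipK v.
have t0 : 0 < t.
  rewrite lt_def; apply/andP; split; last by rewrite -ler0c -(ip_real HK) (ip_ge0 HK).
  apply/eqP => t0; apply: (negP v0); apply/eqP; apply: (ip_eq0 HK).
  by rewrite (ip_real HK) -/t t0.
exists ((Num.sqrt t)^-1%:C *: v).
rewrite (ipZl HK) (ipZr HK) conjc_real (ip_real HK) -/t -!realCM -[RHS]/((1:R)%:C).
congr (_%:C).
rewrite mulrA -invfM -expr2 sqr_sqrtr ?ltW // mulVf // lt0r_neq0 //.
Qed.

Lemma super (lam : R[i]) k : `|lam| < 1 -> higher_rank_numrange ipL k S lam.
Proof.
move=> hl.
have [d [c [cz c1 c2]]] := exists_c hl.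
set D := d.+1.
have D0 : (0 < D)%N by [].
have [w hw] := unit_vec.
pose g (j : nat) n : R[i] := if (j * D <= n)%N then c (n - j * D)%N else 0.
have gsupp : forall j n, g j n != 0 -> (j * D <= n)%N && (n < j * D + d)%N.
  move=> j n; rewrite /g; case: ifP => h; last by rewrite eqxx.
  move=> nz /=; case: ltnP => // hn.
  have e : c (n - j * D)%N = 0 by apply: cz; lia.
  by rewrite e eqxx in nz.
pose f j n := g j n *: w.
have inl2 : forall j, in_l2 ipK (f j).
  move=> j; apply/cvg_ex; eexists; apply: (series_fin (M := j.+1 * D)).
  move=> n hn; rewrite /f /g; case: ifP => h; last by rewrite scale0r (normsq0 HK).
  rewrite cz ?scale0r ?(normsq0 HK) //.
  move: hn; rewrite mulSn; lia.
have [X hX0] := choice (fun j => U_onto HU (inl2 j)).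
have hX : forall j, U (X j) = f j := hX0.
set M := (k * D)%N.
have vanish : forall j, (j < k)%N -> forall n, (M <= n)%N -> g j n = 0.
  move=> j hj n hn; rewrite /g; case: ifP => // h; apply: cz.
  have : (j.+1 * D <= k * D)%N by rewrite leq_mul2r hj orbT.
  move: hn; rewrite /M mulSn; lia.
have vanishS : forall j, (j < k)%N -> forall n, (M <= n)%N -> shiftseq (g j) n = 0.
  move=> j hj [|n] hn //=; rewrite /g; case: ifP => // h; apply: cz.
  have : (j.+1 * D <= k * D)%N by rewrite leq_mul2r hj orbT.
  move: hn; rewrite /M mulSn; lia.
have Uf : forall j n, U (X j) n = g j n *: w.
  by move=> j n; exact: (congr1 (fun h => h n) (hX j)).
have USf : forall j n, U (S (X j)) n = shiftseq (g j) n *: w.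
  by move=> j [|n]; rewrite HS /shiftseq ?scale0r.
have ipw : forall a b : R[i], ipK (a *: w) (b *: w) = a * conjc b.
  by move=> a b; rewrite (ipZl HK) (ipZr HK) hw mulr1.
have ipX : forall i j : 'I_k, ipL (X i) (X j) = \sum_(n < M) g i n * conjc (g j n).
  move=> i j; rewrite (fin_ip HK HL HU (M := M)); last 2 first.
  - by move=> n hn; rewrite Uf vanish ?scale0r.
  - by move=> n hn; rewrite Uf vanish ?scale0r.
  by apply: eq_bigr => n _; rewrite !Uf ipw.
have ipSX : forall i j : 'I_k,
    ipL (S (X i)) (X j) = \sum_(n < M) shiftseq (g i) n * conjc (g j n).
  move=> i j; rewrite (fin_ip HK HL HU (M := M)); last 2 first.
  - by move=> n hn; rewrite USf vanishS ?scale0r.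
  - by move=> n hn; rewrite Uf vanish ?scale0r.
  by apply: eq_bigr => n _; rewrite USf Uf ipw.
have gdisj : forall (i j : 'I_k) n, i != j -> g i n * conjc (g j n) = 0.
  move=> i j n ij.
  case: (eqVneq (g i n) 0) => [->|gi]; first by rewrite mul0r.
  case: (eqVneq (g j n) 0) => [->|gj]; first by rewrite conjc0 mulr0.
  move/gsupp: gi => /andP[hi1 hi2]; move/gsupp: gj => /andP[hj1 hj2].
  have e1 : (n %/ D)%N = i by apply: div_window => //; lia.
  have e2 : (n %/ D)%N = j by apply: div_window => //; lia.
  by move/eqP: ij; case; apply: val_inj; rewrite /= -e1 -e2.
have gdisjS : forall (i j : 'I_k) n, i != j -> shiftseq (g i) n * conjc (g j n) = 0.
  move=> i j [|n] ij; first by rewrite mul0r.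
  rewrite /=.
  case: (eqVneq (g i n) 0) => [->|gi]; first by rewrite mul0r.
  case: (eqVneq (g j n.+1) 0) => [->|gj]; first by rewrite conjc0 mulr0.
  move/gsupp: gi => /andP[hi1 hi2]; move/gsupp: gj => /andP[hj1 hj2].
  have e1 : (n.+1 %/ D)%N = i by apply: div_window => //; lia.
  have e2 : (n.+1 %/ D)%N = j by apply: div_window => //; lia.
  by move/eqP: ij; case; apply: val_inj; rewrite /= -e1 -e2.
have hjM : forall j : 'I_k, (j * D + D <= M)%N.
  move=> j; have := ltn_ord j => hj.
  have : (j.+1 * D <= k * D)%N by rewrite leq_mul2r hj orbT.
  by rewrite /M mulSn addnC.
have gdiag : forall (j : nat) n, g j (j * D + n)%N = c n.
  by move=> j n; rewrite /g leq_addr addKn.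
apply: (numrange_of_onb HL (S_sum HK HL HU HS) (SZ HK HL HU HS) (x := fun j => X j)).
- move=> i j; rewrite ipX; case: (eqVneq i j) => [<-|ij]; last first.
    by rewrite big1 // => n _; apply: gdisj.
  rewrite ?eqxx (@window R (fun n => g i n * conjc (g i n)) (i * D)%N D M (hjM i)); last 2 first.
  + move=> n hn; rewrite /g ifF ?mul0r //; last by apply/negbTE; rewrite -ltnNge.
  + move=> n hn; rewrite /g ifT ?cz ?mul0r //; last by lia.
    move: hn; lia.
  rewrite big_ord_recr /= !gdiag cz // conjc0 mulr0 addr0.
  by rewrite -c1; apply: eq_bigr => n _; rewrite gdiag.
- move=> i j; rewrite ipSX; case: (eqVneq i j) => [<-|ij]; last first.
    by rewrite mulr0 big1 // => n _; apply: gdisjS.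
  rewrite ?eqxx mulr1 (@window R (fun n => shiftseq (g i) n * conjc (g i n)) (i * D)%N D M (hjM i)); last 2 first.
  + move=> n hn; rewrite /g ifF ?conjc0 ?mulr0 //; last by apply/negbTE; rewrite -ltnNge.
  + move=> n hn; rewrite /g ifT ?cz ?conjc0 ?mulr0 //; last by lia.
    move: hn; lia.
  rewrite big_ord_recl /= addn0.
  have -> : shiftseq (g i) (i * D)%N = 0.
    case e: (i * D)%N => [|m] //=; rewrite /g ifF //; apply/negbTE; lia.
  rewrite mul0r add0r -c2; apply: eq_bigr => n _.
  by rewrite /bump /= add1n addnS /= gdiag -addnS gdiag.
Qed.
End Final.

Theorem lemma2p6 (R : realType)
    (K : lmodType R[i]) (ipK : K -> K -> R[i]) (HK : is_hilbert ipK)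
    (HKnz : exists v : K, v != 0)
    (L : lmodType R[i]) (ipL : L -> L -> R[i]) (HL : is_hilbert ipL)
    (S : L -> L) (U : L -> nat -> K) (HU : unitary_onto_l2 ipL ipK U)
    (HS : forall x : L, U (S x) = shiftseq (U x))
    (k : nat) (hk : (0 < k)%N) :
  higher_rank_numrange ipL k S = @unit_disk R.
Proof.
apply/seteqP; split => lam /=.
- case=> P [hP1 hP2 hP3].
  exact: (sub_disk HK HL HU HS hk hP1 hP2 hP3).
- move=> hl; exact: (super HK HKnz HL HU HS).
Qed.
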